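(* Let $k\ge1$ and $n_1,\dots,n_k\in\mathbb{Z}$. The word problem for \[ G=\left\langle a,t,b_1,\dots,b_k \;\middle|\; at=ta,\; b_1^{-1}tb_1=a^{n_1}t,\;\dots,\; b_k^{-1}tb_k=a^{n_k}t\right\rangle \] is solvable. *)

(* Defs.v *)
From mathcomp Require Import all_boot all_order all_algebra.
Set Implicit Arguments. Unset Strict Implicit. Unset Printing Implicit Defensive.
Import Order.TTheory GRing.Theory Num.Theory.

Inductive prf : Type :=
| PZero
| PSucc
| PProj (i : nat)
| PComp (f : prf) (gs : seq prf)
| PRec (f g : prf)
| PMu (f : prf).

Inductive eval : prf -> seq nat -> nat -> Prop :=
| eval_zero xs : eval PZero xs 0
| eval_succ x xs : eval PSucc (x :: xs) x.+1
| eval_proj i xs : i < size xs -> eval (PProj i) xs (nth 0 xs i)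
| eval_comp f gs xs ys y :
    evals gs xs ys -> eval f ys y -> eval (PComp f gs) xs y
| eval_rec0 f g xs y : eval f xs y -> eval (PRec f g) (0 :: xs) y
| eval_recS f g m xs y z :
    eval (PRec f g) (m :: xs) y -> eval g (m :: y :: xs) z ->
    eval (PRec f g) (m.+1 :: xs) z
| eval_mu f xs m :
    eval f (m :: xs) 0 ->
    (forall j, j < m -> exists2 v, 0 < v & eval f (j :: xs) v) ->
    eval (PMu f) xs m
with evals : seq prf -> seq nat -> seq nat -> Prop :=
| evals_nil xs : evals [::] xs [::]
| evals_cons g gs xs y ys :
    eval g xs y -> evals gs xs ys -> evals (g :: gs) xs (y :: ys).

Definition decidable_nat (P : nat -> Prop) : Prop :=
  exists p : prf, forall x : nat,
    (P x -> eval p [:: x] 1) /\ (~ P x -> eval p [:: x] 0).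

(* A letter (i, true) is the generator x_i, (i, false) is x_i^{-1}. *)
Definition letter := (nat * bool)%type.
Definition word := seq letter.

Definition linv (x : letter) : letter := (x.1, ~~ x.2).

(* Cantor pairing (a bijection nat * nat -> nat). *)
Definition cpair (a b : nat) : nat := ((a + b) * (a + b).+1)./2 + b.

Definition code_letter (x : letter) : nat := (x.1).*2 + x.2.
Fixpoint code_word (w : word) : nat :=
  match w with
  | [::] => 0
  | x :: s => (cpair (code_letter x) (code_word s)).+1
  end.

Inductive pstep (R : seq word) : word -> word -> Prop :=
| pstep_red u v x : pstep R (u ++ x :: linv x :: v) (u ++ v)
| pstep_rel u v r : r \in R -> pstep R (u ++ r ++ v) (u ++ v).

Inductive peq (R : seq word) : word -> word -> Prop :=
| peq_refl w : peq R w w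
| peq_step u v : pstep R u v -> peq R u v
| peq_sym u v : peq R u v -> peq R v u
| peq_trans u v w : peq R u v -> peq R v w -> peq R u w.

Definition word_trivial (R : seq word) (w : word) : Prop := peq R w [::].

(* Generator indices: a = 0, t = 1, b_{i+1} = i + 2 (0 <= i < k).          *)
(* The exponent n_{i+1} is [n i].                                          *)

Definition apow (m : int) : word := nseq `|m|%N (0%N, (0 <= m)%R).

(* a t a^{-1} t^{-1} *)
Definition rel_comm : word := [:: (0, true); (1, true); (0, false); (1, false)].

(* b^{-1} t b (a^{n_i} t)^{-1} = b^{-1} t b t^{-1} a^{-n_i} *)
Definition rel_b (n : nat -> int) (i : nat) : word :=
  [:: (i.+2, false); (1, true); (i.+2, true); (1, false)] ++ apow (- n i)%R.

Definition relators (k : nat) (n : nat -> int) : seq word :=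
  rel_comm :: [seq rel_b n i | i <- iota 0 k].

Definition is_word (k : nat) (w : word) : bool := all (fun x => x.1 < k.+2) w.

Definition word_problem_solvable (k : nat) (R : seq word) : Prop :=
  decidable_nat (fun c => exists w : word,
    [/\ code_word w = c, is_word k w & word_trivial R w]).

(* Main.v *)
Require Import Defs.
From mathcomp Require Import all_boot all_order all_algebra zify ring lra.
From Stdlib Require Import Setoid Morphisms.
Set Implicit Arguments. Unset Strict Implicit. Unset Printing Implicit Defensive.

Module PartA.

Definition comp (n : nat) (f : seq nat -> nat) :=
  exists p, forall xs, size xs = n -> eval p xs (f xs).

Lemma comp_ext n f g : comp n f -> (forall xs, size xs = n -> f xs = g xs) -> comp n g.
Proof. by case=> p Hp H; exists p => xs Hs; rewrite -H //; apply: Hp. Qed.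

Lemma cvar n i : i < n -> comp n (fun xs => nth 0 xs i).
Proof. by move=> H; exists (PProj i) => xs Hs; apply: eval_proj; rewrite Hs. Qed.

Lemma czero n : comp n (fun _ => 0).
Proof. by exists PZero => xs _; apply: eval_zero. Qed.

Fixpoint all_comp n (Gs : seq (seq nat -> nat)) : Prop :=
  if Gs is G :: Gs' then comp n G /\ all_comp n Gs' else True.

Lemma all_comp_progs n Gs : all_comp n Gs ->
  exists ps, forall xs, size xs = n -> evals ps xs (map (fun G => G xs) Gs).
Proof.
elim: Gs => [|G Gs IH] /=; first by exists [::] => xs _; apply: evals_nil.
case=> [[p Hp] /IH [ps Hps]]; exists (p :: ps) => xs Hs.
by apply: evals_cons; [apply: Hp | apply: Hps].
Qed.

Lemma comp_comp n m F Gs : comp m F -> size Gs = m -> all_comp n Gs ->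
  comp n (fun xs => F (map (fun G => G xs) Gs)).
Proof.
case=> p Hp Hs /all_comp_progs [ps Hps]; exists (PComp p ps) => xs Hxs.
by apply: eval_comp (Hps _ Hxs) _; apply: Hp; rewrite size_map.
Qed.

Definition C1 (f : nat -> nat) := comp 1 (fun xs => f (nth 0 xs 0)).
Definition C2 (f : nat -> nat -> nat) := comp 2 (fun xs => f (nth 0 xs 0) (nth 0 xs 1)).
Definition C3 (f : nat -> nat -> nat -> nat) :=
  comp 3 (fun xs => f (nth 0 xs 0) (nth 0 xs 1) (nth 0 xs 2)).

Lemma cc1 n f G : C1 f -> comp n G -> comp n (fun xs => f (G xs)).
Proof. by move=> Hf HG; apply: (comp_comp (Gs := [:: G]) Hf). Qed.
Lemma cc2 n f G1 G2 : C2 f -> comp n G1 -> comp n G2 -> comp n (fun xs => f (G1 xs) (G2 xs)).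
Proof. by move=> Hf H1 H2; apply: (comp_comp (Gs := [:: G1; G2]) Hf). Qed.
Lemma cc3 n f G1 G2 G3 : C3 f -> comp n G1 -> comp n G2 -> comp n G3 ->
  comp n (fun xs => f (G1 xs) (G2 xs) (G3 xs)).
Proof. by move=> Hf H1 H2 H3; apply: (comp_comp (Gs := [:: G1; G2; G3]) Hf). Qed.

Lemma C1succ : C1 succn.
Proof. by exists PSucc => [[|x [|]]] //= _; apply: eval_succ. Qed.

Lemma cconst n c : comp n (fun _ => c).
Proof. elim: c => [|c IH]; [exact: czero | exact: (cc1 C1succ IH)]. Qed.

Fixpoint prec (f g : seq nat -> nat) (m : nat) (xs : seq nat) : nat :=
  if m is m'.+1 then g (m' :: prec f g m' xs :: xs) else f xs.

Lemma comp_rec n f g : comp n f -> comp n.+2 g ->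
  comp n.+1 (fun xs => prec f g (head 0 xs) (behead xs)).
Proof.
case=> pf Hf [pg Hg]; exists (PRec pf pg) => [[|m ys]] //= [Hs].
elim: m => [|m IH] /=; first by apply: eval_rec0; apply: Hf.
by apply: eval_recS IH _; apply: Hg; rewrite /= Hs.
Qed.

Ltac ccomp := repeat first
  [ apply: cvar; done
  | apply: cconst
  | apply: cc3; [solve [eauto with cdb] | | | ]
  | apply: cc2; [solve [eauto with cdb] | | ]
  | apply: cc1; [solve [eauto with cdb] | ] ].

#[export] Hint Resolve C1succ : cdb.

Lemma C2add : C2 addn.
Proof.
apply: comp_ext (comp_rec (cvar (n := 1) (i := 0) erefl) (cc1 C1succ (cvar (n := 3) (i:=1) erefl))) _.
move=> [|m [|y [|]]] //= _; by elim: m => //= m ->.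
Qed.
#[export] Hint Resolve C2add : cdb.

Lemma C1pred : C1 predn.
Proof.
apply: comp_ext (comp_rec (czero 0) (cvar (n := 2) (i:=0) erefl)) _.
by move=> [|[|m] [|]] //=.
Qed.
#[export] Hint Resolve C1pred : cdb.

Definition rsub m a := a - m.
Lemma C2rsub : C2 rsub.
Proof.
apply: comp_ext (comp_rec (cvar (n := 1) (i := 0) erefl) (cc1 C1pred (cvar (n := 3) (i:=1) erefl))) _.
move=> [|m [|y [|]]] //= _; rewrite /rsub; elim: m => //= [|m ->]; first by rewrite subn0.
by rewrite subnS.
Qed.
Lemma C2sub : C2 subn.
Proof.
have H := cc2 (n := 2) C2rsub (cvar (n:=2) (i:=1) erefl) (cvar (n:=2) (i:=0) erefl).
by apply: (comp_ext H).
Qed.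
#[export] Hint Resolve C2sub : cdb.

Lemma C2mul : C2 muln.
Proof.
have H := comp_rec (czero 1) (cc2 (n := 3) C2add (cvar (n:=3) (i:=1) erefl) (cvar (n:=3) (i:=2) erefl)).
apply: (comp_ext H) => [[|m [|y [|]]]] //= _; elim: m => //= m ->; by rewrite mulSn addnC.
Qed.
#[export] Hint Resolve C2mul : cdb.

Definition ifz (c a b : nat) := if c is 0 then a else b.
Lemma C3ifz : C3 ifz.
Proof.
have H := comp_rec (cvar (n := 2) (i:=0) erefl) (cvar (n := 4) (i:=3) erefl).
by apply: (comp_ext H) => [[|[|m] [|a [|b [|]]]]].
Qed.
#[export] Hint Resolve C3ifz : cdb.

Definition eqN (a b : nat) : nat := 1 - ((a - b) + (b - a)).
Lemma eqNE a b : eqN a b = (a == b).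
Proof. rewrite /eqN; case: eqVneq => [->|H]; first by rewrite subnn.
move: H; rewrite neq_ltn => /orP [] H; lia. Qed.

Lemma C2eqN : C2 eqN.
Proof. rewrite /C2 /eqN; ccomp. Qed.
#[export] Hint Resolve C2eqN : cdb.

Definition leN (a b : nat) : nat := 1 - (a - b).
Lemma leNE a b : leN a b = (a <= b).
Proof. rewrite /leN; case: leqP => H; lia. Qed.
Lemma C2leN : C2 leN.
Proof. rewrite /C2 /leN; ccomp. Qed.
#[export] Hint Resolve C2leN : cdb.

Fixpoint tri s := if s is s'.+1 then tri s' + s'.+1 else 0.
Lemma triE s : tri s = (s * s.+1)./2.
Proof.
suff H : s * s.+1 = (tri s).*2 by rewrite H doubleK.
elim: s => //= s IH; rewrite doubleD -IH -addnn; nia.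
Qed.
Lemma C1tri : C1 tri.
Proof.
have H := comp_rec (czero 0) (cc2 (n := 2) C2add (cvar (n:=2) (i:=1) erefl)
   (cc1 C1succ (cvar (n:=2) (i:=0) erefl))).
apply: (comp_ext H) => [[|m [|]]] //= _; by elim: m => //= m ->.
Qed.
#[export] Hint Resolve C1tri : cdb.

Lemma cpairE a b : cpair a b = tri (a + b) + b.
Proof. by rewrite /cpair triE. Qed.
Lemma C2cpair : C2 cpair.
Proof. apply: (@comp_ext _ (fun xs => tri (nth 0 xs 0 + nth 0 xs 1) + nth 0 xs 1)); first ccomp.
by move=> xs _; rewrite cpairE. Qed.
#[export] Hint Resolve C2cpair : cdb.

Fixpoint cnt m c := if m is m'.+1 then cnt m' c + leN (tri m'.+1) c else 0.
Lemma C2cnt : C2 cnt.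
Proof.
have H := comp_rec (czero 1) (cc2 (n := 3) C2add (cvar (n:=3) (i:=1) erefl)
   (cc2 C2leN (cc1 C1tri (cc1 C1succ (cvar (n:=3) (i:=0) erefl))) (cvar (n:=3) (i:=2) erefl))).
apply: (comp_ext H) => [[|m [|c [|]]]] //= _; by elim: m => //= m ->.
Qed.
#[export] Hint Resolve C2cnt : cdb.

Lemma leq_tri m n : m <= n -> tri m <= tri n.
Proof. elim: n => [|n IH]; first by rewrite leqn0 => /eqP ->.
rewrite leq_eqVlt ltnS => /orP [/eqP -> //| /IH]; rewrite /=; lia. Qed.

Definition usum c := cnt c c.
Definition usnd c := c - tri (usum c).
Definition ufst c := usum c - usnd c.

Lemma cnt_min m s b : b <= s -> cnt m (tri s + b) = minn m s.
Proof.
move=> Hb; elim: m => [|m IH] /=; first by rewrite min0n.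
rewrite IH leNE.
case: (ltnP m s) => H.
- rewrite (leq_trans (leq_tri H)) ?leq_addr //; rewrite !minnE; lia.
- have : tri s + b < tri m.+1.
    have := leq_tri H; rewrite /=; lia.
  rewrite ltnNge => /negbTE ->; rewrite !minnE; lia.
Qed.

Lemma leq_tri_id s : s <= tri s.
Proof. elim: s => //= s; lia. Qed.

Lemma usumE a b : usum (cpair a b) = a + b.
Proof. rewrite /usum cpairE cnt_min ?leq_addl //; have := leq_tri_id (a + b); rewrite !minnE; lia. Qed.
Lemma usndE a b : usnd (cpair a b) = b.
Proof. by rewrite /usnd usumE cpairE addKn. Qed.
Lemma ufstE a b : ufst (cpair a b) = a.
Proof. by rewrite /ufst usndE usumE addnK. Qed.

Lemma cpair_surj c : exists a b, cpair a b = c.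
Proof.
elim: c => [|c [a [b <-]]]; first by exists 0, 0.
case: a => [|a]; [exists b.+1, 0 | exists a, b.+1]; rewrite !cpairE ?addn0 ?add0n ?addnS ?addSn /=; lia.
Qed.
Lemma cpairK c : cpair (ufst c) (usnd c) = c.
Proof. by have [a [b <-]] := cpair_surj c; rewrite ufstE usndE. Qed.
Lemma cpair_inj a b a' b' : cpair a b = cpair a' b' -> a = a' /\ b = b'.
Proof. by move=> H; split; [rewrite -(ufstE a b) H ufstE | rewrite -(usndE a b) H usndE]. Qed.

Lemma C1usum : C1 usum.
Proof. rewrite /C1 /usum; ccomp. Qed.
#[export] Hint Resolve C1usum : cdb.
Lemma C1usnd : C1 usnd.
Proof. rewrite /C1 /usnd; ccomp. Qed.
#[export] Hint Resolve C1usnd : cdb.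
Lemma C1ufst : C1 ufst.
Proof. rewrite /C1 /ufst; ccomp. Qed.
#[export] Hint Resolve C1ufst : cdb.

Lemma C1odd : C1 (fun m => nat_of_bool (odd m)).
Proof.
have H := comp_rec (czero 0) (cc2 (n := 2) C2sub (cconst 2 1) (cvar (n:=2) (i:=1) erefl)).
apply: (comp_ext H) => [[|m [|]]] //= _; elim: m => //= m ->; by case: (odd m).
Qed.
#[export] Hint Resolve C1odd : cdb.
Lemma C1half : C1 half.
Proof.
have H := comp_rec (czero 0) (cc2 (n := 2) C2add (cvar (n:=2) (i:=1) erefl)
    (cc1 C1odd (cvar (n:=2) (i:=0) erefl))).
apply: (comp_ext H) => [[|m [|]]] //= _; elim: m => //= m ->; by rewrite uphalf_half addnC.
Qed.
#[export] Hint Resolve C1half : cdb.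

Lemma C1tab (f : nat -> nat) k : C1 (fun i => if i < k then f i else 0).
Proof.
elim: k => [|k IH]; first exact: (cconst 1 0).
apply: (@comp_ext _ (fun xs => ifz (eqN (nth 0 xs 0) k) (if nth 0 xs 0 < k then f (nth 0 xs 0) else 0) (f k))).
  apply: cc3; [exact: C3ifz | ccomp | exact: IH | exact: cconst].
move=> xs _; rewrite eqNE; case: eqVneq => [->|H] /=; first by rewrite ltnSn.
by have -> : (nth 0 xs 0 < k.+1) = (nth 0 xs 0 < k) by rewrite ltnS leq_eqVlt (negbTE H).
Qed.

End PartA.
Import PartA.

Module PartB.
Import Order.TTheory GRing.Theory Num.Theory.
Local Open Scope ring_scope.

Definition syl := (nat * bool * int)%type.
Definition nf := ((int * int) * seq syl)%type.

Definition bad (s1 s2 : syl) : bool :=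
  [&& s1.2 == 0, (s1.1.1 == s2.1.1)%N & s2.1.2 == ~~ s1.1.2].
Fixpoint reduced (L : seq syl) : bool :=
  match L with
  | s1 :: ((s2 :: _) as L') => ~~ bad s1 s2 && reduced L'
  | _ => true
  end.

Definition sgnz (s : bool) : int := if s then 1 else -1.

Section Act.
Variable nn : nat -> int.

Definition act (x : letter) (N : nf) : nf :=
  let: (hx, hy, L) := N in
  match x with
  | (O, s) => (hx + sgnz s, hy, L)
  | (S O, s) => (hx, hy + sgnz s, L)
  | (S (S i), true) =>
      let c := hx - nn i * hy in
      match L with
      | (i', false, c1) :: L' =>
          if (c == 0) && (i' == i)%N then (c1, hy, L') else (0, hy, (i, true, c) :: L)
      | _ => (0, hy, (i, true, c) :: L)
      end
  | (S (S i), false) =>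
      match L with
      | (i', true, c1) :: L' =>
          if (hx == 0) && (i' == i)%N then (nn i * hy + c1, hy, L')
          else (nn i * hy, hy, (i, false, hx) :: L)
      | _ => (nn i * hy, hy, (i, false, hx) :: L)
      end
  end.

Definition act_word (w : word) (N : nf) : nf := foldr act N w.

Lemma reduced_tail s L : reduced (s :: L) -> reduced L.
Proof. by case: L => //= s2 L /andP []. Qed.

Lemma act_reduced x N : reduced N.2 -> reduced (act x N).2.
Proof.
case: N => [[hx hy] L] /= HL; case: x => [[|[|i]] s] //=.
case: s; case: L HL => [|[[i' e'] c1] L'] //= HL; case: e' HL => HL //=;
  try case: ifP => H //=; try by move/reduced_tail: HL.
all: rewrite HL andbT /bad /= ?negb_and /= ?orbT //.
all: by move: H; rewrite (eq_sym i'); case: (_ == 0); case: (i == i').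
Qed.

Lemma bad_false i c1 i'' e c2 L :
  ~~ bad (i, e, c1) (i'', ~~ e, c2) && L -> (c1 == 0) && (i'' == i)%N = false.
Proof. by rewrite /bad /= eqxx andbT (eq_sym i'') => /andP [/negbTE]. Qed.

Lemma act_linv x N : reduced N.2 -> act (linv x) (act x N) = N.
Proof.
case: N => [[hx hy] L] /= HL; case: x => [[|[|i]] s] /=.
- by congr (_, _, _); case: s; rewrite /sgnz /=; ring.
- by congr (_, _, _); case: s; rewrite /sgnz /=; ring.
case: s => /=.
- case: L HL => [|[[i' e'] c1] L'] HL /=.
  + by rewrite eqxx; congr (_, _, _); ring.
  case: e' HL => HL /=.
  + by rewrite eqxx /=; congr (_, _, _); ring.
  case: ifP => [/andP [/eqP Hc /eqP Hi]|H] /=.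
  + subst i'.
    have Hx : hx = nn i * hy by apply/eqP; rewrite -subr_eq0 Hc.
    case: L' HL => [|[[i'' e''] c2] L''] HL /=; first by rewrite Hx.
    case: e'' HL => HL /=; last by rewrite Hx.
    by rewrite (bad_false (e := false) HL) Hx.
  + by rewrite eqxx /=; congr (_, _, _); ring.
- case: L HL => [|[[i' e'] c1] L'] HL /=.
  + by rewrite subrr eqxx /=.
  case: e' HL => HL /=; last by rewrite subrr eqxx /=.
  case: ifP => [/andP [/eqP Hc /eqP Hi]|H] /=; last by rewrite subrr eqxx.
  subst i' hx; rewrite addrC addKr.
  case: L' HL => [|[[i'' e''] c2] L''] HL //=.
  case: e'' HL => HL //=.
  by rewrite (bad_false (e := true) HL).
Qed.

Lemma act_word_cat u v N : act_word (u ++ v) N = act_word u (act_word v N).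
Proof. by rewrite /act_word foldr_cat. Qed.

Lemma act_nseq0 m s hx hy L :
  act_word (nseq m (0%N, s)) (hx, hy, L) = (hx + (m%:Z) * sgnz s, hy, L).
Proof.
elim: m => [|m IH] /=; first by rewrite mul0r addr0.
by rewrite IH; congr (_, _, _); rewrite -addn1 PoszD; ring.
Qed.

Lemma act_apow z hx hy L : act_word (apow z) (hx, hy, L) = (hx + z, hy, L).
Proof.
rewrite /apow act_nseq0; congr (_, _, _); case: z => m /=; first by rewrite mulr1.
by rewrite NegzE /sgnz /=; ring.
Qed.

Lemma act_rel_comm N : act_word rel_comm N = N.
Proof. case: N => [[hx hy] L] /=; rewrite /sgnz; congr (_, _, _); ring. Qed.

Lemma act_rel_b (n : nat -> int) i N : n i = nn i -> reduced N.2 -> act_word (rel_b n i) N = N.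
Proof.
case: N => [[hx hy] L] /= Hn HL; rewrite act_apow Hn /= /sgnz.
have -> : hx + - nn i - nn i * (hy - 1) = hx - nn i * hy by ring.
case: L HL => [|[[i' e'] c1] L'] HL /=.
  by rewrite subrK eqxx; congr (_, _, _); ring.
case: e' HL => HL /=.
  by rewrite subrK !eqxx; congr (_, _, _); ring.
case: ifP => [/andP [/eqP Hc /eqP Hi]|H] /=.
- subst i'; rewrite subrK.
  have Hx : hx = nn i * hy by apply/eqP; rewrite -subr_eq0 Hc.
  case: L' HL => [|[[i'' e''] c2] L''] HL /=; first by rewrite Hx.
  case: e'' HL => HL /=; last by rewrite Hx.
  by rewrite (bad_false (e := false) HL) Hx.
- by rewrite subrK !eqxx; congr (_, _, _); ring.
Qed.


Lemma act_word_reduced w N : reduced N.2 -> reduced (act_word w N).2.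
Proof. by elim: w => //= x w IH H; apply: act_reduced; apply: IH. Qed.

Lemma peq_act (R : seq word) : (forall r N, r \in R -> reduced N.2 -> act_word r N = N) ->
  forall u v, peq R u v -> forall N, reduced N.2 -> act_word u N = act_word v N.
Proof.
move=> HR u v; elim=> [w|u0 v0 H|u0 v0 _ IH|u0 v0 w0 _ IH1 _ IH2] N HN //.
- case: H => [u1 v1 x|u1 v1 r Hr]; rewrite !act_word_cat /=.
  + have := act_linv (linv x) (act_word_reduced v1 HN).
    by rewrite /linv /= negbK; case: x => ?? ->.
  + by rewrite (HR r) //; apply: act_word_reduced.
- by rewrite IH.
- by rewrite IH1 // IH2.
Qed.
End Act.

End PartB.
Import PartB.

Module PartC.
Import Order.TTheory GRing.Theory Num.Theory.

Section Peq.
Variable R : seq word.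

Lemma pstep_ctx p q u v : pstep R u v -> pstep R (p ++ u ++ q) (p ++ v ++ q).
Proof.
case=> [u0 v0 x | u0 v0 r Hr].
- have := pstep_red R (p ++ u0) (v0 ++ q) x; by rewrite -!catA /= -?catA.
- have := pstep_rel (p ++ u0) (v0 ++ q) Hr; by rewrite -!catA -?catA.
Qed.

Lemma peq_ctx p q u v : peq R u v -> peq R (p ++ u ++ q) (p ++ v ++ q).
Proof.
elim=> [w|u0 v0 H|u0 v0 _ IH|u0 v0 w0 _ IH1 _ IH2].
- exact: peq_refl.
- exact/peq_step/pstep_ctx.
- exact: peq_sym.
- exact: peq_trans IH1 IH2.
Qed.

#[local] Instance peq_Equiv : Equivalence (peq R).
Proof. split; [exact: peq_refl | exact: peq_sym | exact: peq_trans]. Qed.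

#[local] Instance cat_Proper : Proper (peq R ==> peq R ==> peq R) cat.
Proof.
move=> u u' Hu v v' Hv; transitivity (u' ++ v).
- by have := peq_ctx [::] v Hu; rewrite /= .
- by have := peq_ctx u' [::] Hv; rewrite !cats0.
Qed.

#[local] Instance cons_Proper : Proper (eq ==> peq R ==> peq R) cons.
Proof. move=> x y -> u v H; exact: (cat_Proper (peq_refl R [:: y]) H). Qed.

Lemma canc x v : peq R (x :: linv x :: v) v.
Proof. exact: (peq_step (pstep_red R [::] v x)). Qed.

Local Notation "u == v" := (peq R u v) : peq_scope.
Local Open Scope peq_scope.
#[local] Hint Resolve peq_refl : core.

Lemma linvK x : linv (linv x) = x.
Proof. by case: x => g s; rewrite /linv /= negbK. Qed.

Lemma canc' x v : linv x :: x :: v == v.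
Proof. by have := canc (linv x) v; rewrite linvK. Qed.

Lemma cancc x u v : u ++ x :: linv x :: v == u ++ v.
Proof. by rewrite canc. Qed.

Definition gpow (g : nat) (z : int) : word := nseq `|z|%N (g, (0 <= z)%R).

Lemma gpow_step g s z : (g, s) :: gpow g z == gpow g (z + sgnz s)%R.
Proof.
rewrite /gpow /sgnz; case: z => m; case: s.
- have -> : (Posz m + 1)%R = Posz m.+1 by lia.
  by [].
- case: m => [|m].
  + have -> : (Posz 0 + -1)%R = Negz 0 by rewrite NegzE; lia.
    reflexivity.
  + have -> : (Posz m.+1 + -1)%R = Posz m by lia.
    exact: (canc (g, false) _).
- case: m => [|m].
  + have -> : (Negz 0 + 1)%R = Posz 0 by rewrite NegzE; lia.
    exact: (canc (g, true) _).
  + have -> : (Negz m.+1 + 1)%R = Negz m by rewrite !NegzE; lia.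
    exact: (canc (g, true) _).
- have -> : (Negz m + -1)%R = Negz m.+1 by rewrite !NegzE; lia.
  by [].
Qed.

Lemma gpowS g m : gpow g (Posz m.+1) = (g, true) :: gpow g (Posz m).
Proof. by []. Qed.
Lemma gpowN g m : gpow g (Negz m.+1) = (g, false) :: gpow g (Negz m).
Proof. by []. Qed.

Lemma gpow_add g z z' : gpow g z ++ gpow g z' == gpow g (z + z')%R.
Proof.
case: z => m.
- elim: m => [|m IH]; first by rewrite add0r.
  rewrite gpowS cat_cons IH gpow_step /sgnz.
  by have -> : (Posz m + z' + 1 = Posz m.+1 + z')%R by lia.
- elim: m => [|m IH].
  + rewrite /= gpow_step /sgnz.
    by have -> : (z' + -1 = Negz 0 + z')%R by rewrite NegzE; lia.
  + rewrite gpowN cat_cons IH gpow_step /sgnz.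
    by have -> : (Negz m + z' + -1 = Negz m.+1 + z')%R by rewrite !NegzE; lia.
Qed.

Lemma gpow0 g : gpow g 0 = [::].
Proof. by []. Qed.

Lemma rel_remove r u v : r \in R -> u ++ r ++ v == u ++ v.
Proof. by move=> Hr; apply: peq_step; apply: pstep_rel. Qed.

Definition commute x y := forall v, x :: y :: v == y :: x :: v.

Lemma comm_sym x y : commute x y -> commute y x.
Proof. by move=> H v; rewrite H. Qed.

Lemma comm_invl x y : commute x y -> commute (linv x) y.
Proof.
move=> H v; transitivity (linv x :: y :: x :: linv x :: v); first by rewrite canc.
by rewrite -H canc'.
Qed.

Lemma comm_invr x y : commute x y -> commute x (linv y).
Proof. by move=> /comm_sym /comm_invl /comm_sym. Qed.

Lemma comm_nseq x y m v : commute x y -> y :: nseq m x ++ v == nseq m x ++ y :: v.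
Proof. by move=> H; elim: m => //= m IH; rewrite -IH -H. Qed.

End Peq.

Section Grp.
Variables (k : nat) (n : nat -> int).
Local Notation R := (relators k n).
Local Notation "u == v" := (peq R u v) : peq_scope.
Local Open Scope peq_scope.
#[local] Hint Resolve peq_refl : core.
#[local] Existing Instance peq_Equiv.
#[local] Existing Instance cat_Proper.
#[local] Existing Instance cons_Proper.

Lemma comm_at : commute R (0%N, true) (1%N, true).
Proof.
apply: comm_sym => v.
have Hr : rel_comm \in R by rewrite /relators inE eqxx.
transitivity (rel_comm ++ [:: (1%N, true), (0%N, true) & v]).
  by symmetry; exact: (rel_remove [::] [:: (1%N, true), (0%N, true) & v] Hr).
rewrite /rel_comm /=.
by rewrite (canc' _ (1%N, true)) (canc' _ (0%N, true)).
Qed.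

Lemma comm_at_all s s' : commute R (0%N, s) (1%N, s').
Proof.
have H := comm_at; case: s; case: s'; rewrite //.
- exact: (comm_invr H).
- exact: (comm_invl H).
- exact: (comm_invr (comm_invl H)).
Qed.

Lemma comm_gpow s z v : (1%N, s) :: gpow 0 z ++ v == gpow 0 z ++ (1%N, s) :: v.
Proof. apply: comm_nseq; exact: comm_at_all. Qed.

Lemma comm_gpow2 z z' v : gpow 1 z' ++ gpow 0 z ++ v == gpow 0 z ++ gpow 1 z' ++ v.
Proof.
rewrite /gpow; elim: `|z'|%N => //= m IH.
by rewrite IH -/(gpow 0 z) comm_gpow.
Qed.

Section Stable.
Variables (i : nat) (Hi : (i < k)%N).
Local Notation m := (n i).
Local Notation b := (i.+2, true).
Local Notation B := (i.+2, false).
Local Notation t := (1%N, true).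
Local Notation T := (1%N, false).

Lemma relb_in : rel_b n i \in R.
Proof. by rewrite /relators inE; apply/orP; right; apply/mapP; exists i; rewrite // mem_iota. Qed.

Lemma relb_remove v : [:: B, t, b, T & gpow 0 (- m)%R ++ v] == v.
Proof. exact: (rel_remove [::] v relb_in). Qed.

Lemma gpow_split z z' w : gpow 0 z ++ w == gpow 0 z' ++ gpow 0 (z - z')%R ++ w.
Proof. by rewrite catA gpow_add; have -> : (z' + (z - z') = z)%R by ring. Qed.

Lemma keyrel v : b :: gpow 0 m ++ t :: v == t :: b :: v.
Proof.
symmetry; transitivity (b :: B :: t :: b :: v); first by rewrite (canc _ b).
transitivity (b :: B :: t :: b :: T :: t :: v); first by rewrite (canc' _ t).
rewrite -(relb_remove (gpow 0 m ++ t :: v)).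
rewrite catA gpow_add; have -> : (- m + m = 0)%R by ring.
reflexivity.
Qed.

Lemma keyrel2 v : b :: gpow 0 (- m)%R ++ T :: v == T :: b :: v.
Proof.
symmetry; transitivity (T :: b :: gpow 0 m ++ gpow 0 (- m)%R ++ v).
  by rewrite catA gpow_add; have -> : (m + - m = 0)%R by ring; reflexivity.
transitivity (T :: b :: gpow 0 m ++ t :: T :: gpow 0 (- m)%R ++ v); first by rewrite (canc _ t).
by rewrite keyrel (canc' _ t) comm_gpow.
Qed.

Lemma stepP x w : b :: gpow 0 x ++ t :: w == t :: b :: gpow 0 (x - m)%R ++ w.
Proof. by rewrite (gpow_split x m) -comm_gpow keyrel. Qed.

Lemma stepN x w : b :: gpow 0 x ++ T :: w == T :: b :: gpow 0 (x + m)%R ++ w.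
Proof.
rewrite (gpow_split x (- m)%R) -comm_gpow keyrel2.
by have -> : (x - - m = x + m)%R by ring.
Qed.

Lemma key1 y x v : b :: gpow 0 x ++ gpow 1 y ++ v == gpow 1 y ++ b :: gpow 0 (x - m * y)%R ++ v.
Proof.
case: y => j.
- elim: j x => [|j IH] x; first by rewrite mulr0 subr0.
  rewrite gpowS !cat_cons stepP IH.
  by have -> : (x - m - m * j = x - m * Posz j.+1)%R by rewrite -addn1 PoszD; ring.
- elim: j x => [|j IH] x.
  + rewrite /= stepN.
    by have -> : (x + m = x - m * Negz 0)%R by rewrite NegzE; ring.
  + rewrite gpowN !cat_cons stepN IH.
    by have -> : (x + m - m * Negz j = x - m * Negz j.+1)%R by rewrite !NegzE -addn1 PoszD; ring.
Qed.

Lemma key2 x y v : B :: gpow 0 x ++ gpow 1 y ++ v == gpow 0 (m * y)%R ++ gpow 1 y ++ B :: gpow 0 x ++ v.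
Proof.
rewrite -comm_gpow2; set w := gpow 0 x ++ v.
symmetry; transitivity (B :: b :: gpow 0 (m * y)%R ++ gpow 1 y ++ B :: w); first by rewrite (canc' _ b).
by rewrite key1 subrr (canc _ b).
Qed.

End Stable.

Definition nn (j : nat) : int := if (j < k)%N then n j else 0.

Definition sylw (s : syl) : word := (s.1.1.+2, s.1.2) :: gpow 0 s.2.
Definition nfword (N : nf) : word :=
  gpow 0 N.1.1 ++ gpow 1 N.1.2 ++ flatten (map sylw N.2).

Lemma nfword_act x N : (x.1 < k.+2)%N -> reduced N.2 ->
  x :: nfword N == nfword (act nn x N).
Proof.
case: N => [[hx hy] L]; case: x => [[|[|i]] s] /= Hx HL; rewrite /nfword /=.
- by rewrite -cat_cons gpow_step.
- by rewrite comm_gpow -cat_cons gpow_step.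
have Hi : (i < k)%N by [].
have Hn : nn i = n i by rewrite /nn Hi.
rewrite Hn; case: s.
- rewrite key1 //.
  case: L HL => [|[[i' e'] c1] L'] HL /=; first by [].
  case: e' HL => HL /=; first by [].
  case: ifP => [/andP [/eqP Hc /eqP Hi']|H] /=; last by [].
  subst i'; rewrite Hc /= (canc _ (i.+2, true)) comm_gpow2; reflexivity.
- rewrite key2 //.
  case: L HL => [|[[i' e'] c1] L'] HL /=; first by [].
  case: e' HL => HL /=; last by [].
  case: ifP => [/andP [/eqP Hc /eqP Hi']|H] /=; last by [].
  subst i' hx; rewrite /= (canc' _ (i.+2, true)) comm_gpow2 catA gpow_add; reflexivity.
Qed.

Lemma nfword_act_word w N : is_word k w -> reduced N.2 ->
  w ++ nfword N == nfword (act_word nn w N).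
Proof.
elim: w => [|x w IH] /= Hw HN; first by [].
move/andP: Hw => [Hx Hw].
rewrite IH // nfword_act //; exact: act_word_reduced.
Qed.

Lemma act_rel r N : r \in R -> reduced N.2 -> act_word nn r N = N.
Proof.
rewrite /relators inE => /orP [/eqP ->|/mapP [i]]; first by move=> _; apply: act_rel_comm.
rewrite mem_iota add0n => /andP [_ Hi] -> HN; apply: act_rel_b => //.
by rewrite /nn Hi.
Qed.

Definition winv (w : word) : word := rev (map linv w).

Lemma winv_cancel u : winv u ++ u == [::].
Proof.
elim: u => [|x u IH] //=; rewrite /winv /= rev_cons -cats1 -catA /=.
by rewrite -{2}(linvK x) (canc _ (linv x)).
Qed.

Lemma winvK u : winv (winv u) = u.
Proof. by rewrite /winv map_rev revK -map_comp (eq_map linvK) map_id. Qed.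

Lemma winv_triv u : u == [::] -> winv u == [::].
Proof.
move=> H; transitivity (winv u ++ u); last exact: winv_cancel.
rewrite -{1}(cats0 (winv u)); apply: cat_Proper => //; symmetry; exact: H.
Qed.

Lemma is_word_winv w : is_word k w -> is_word k (winv w).
Proof. by rewrite /is_word /winv all_rev all_map; apply: sub_all => x. Qed.

Definition nf0 : nf := (0%R, 0%R, [::]).

Lemma triv_iff w : is_word k w ->
  word_trivial R w <-> act_word nn (winv w) nf0 = nf0.
Proof.
move=> Hw; split.
- move=> /winv_triv H.
  by have := peq_act act_rel H (N := nf0) erefl.
- move=> H; rewrite /word_trivial -(winvK w); apply: winv_triv.
  have := nfword_act_word (is_word_winv Hw) (N := nf0) erefl.
  by rewrite H cats0.
Qed.

Lemma act_winv w N : act_word nn (winv w) N = foldl (fun N x => act nn (linv x) N) N w.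
Proof.
elim: w N => //= x w IH N.
by rewrite /winv /= rev_cons -cats1 /act_word foldr_cat /= -IH.
Qed.

End Grp.

End PartC.
Import PartC.

Module PartD.
Import Order.TTheory GRing.Theory Num.Theory.

Definition codeZ (z : int) : nat :=
  match z with Posz p => cpair p 0 | Negz q => cpair 0 q.+1 end.

Lemma codeZ_E z : exists p q, codeZ z = cpair p q /\ z = (p%:Z - q%:Z)%R.
Proof.
case: z => m; [exists m, 0 | exists 0, m.+1]; split => //.
- by rewrite subr0.
- by rewrite NegzE sub0r.
Qed.

Definition znorm p q := cpair (p - q) (q - p).
Lemma znormE p q : znorm p q = codeZ (p%:Z - q%:Z)%R.
Proof.
rewrite /znorm; case: (leqP q p) => H.
- have -> : (p%:Z - q%:Z)%R = Posz (p - q) by lia.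
  by rewrite /= (eqP (_ : q - p == 0)) ?subn_eq0.
- have -> : (p%:Z - q%:Z)%R = Negz (q - p).-1 by rewrite NegzE; lia.
  by rewrite /= prednK ?subn_gt0 // (eqP (_ : p - q == 0)) ?subn_eq0 // ltnW.
Qed.

Definition zadd c d := znorm (ufst c + ufst d) (usnd c + usnd d).
Definition zsub c d := znorm (ufst c + usnd d) (usnd c + ufst d).
Definition zmul c d := znorm (ufst c * ufst d + usnd c * usnd d) (ufst c * usnd d + usnd c * ufst d).

Lemma zaddE a b : zadd (codeZ a) (codeZ b) = codeZ (a + b)%R.
Proof.
have [p [q [-> ->]]] := codeZ_E a; have [p' [q' [-> ->]]] := codeZ_E b.
rewrite /zadd !ufstE !usndE znormE; congr codeZ; rewrite !PoszD; ring.
Qed.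
Lemma zsubE a b : zsub (codeZ a) (codeZ b) = codeZ (a - b)%R.
Proof.
have [p [q [-> ->]]] := codeZ_E a; have [p' [q' [-> ->]]] := codeZ_E b.
rewrite /zsub !ufstE !usndE znormE; congr codeZ; rewrite !PoszD; ring.
Qed.
Lemma zmulE a b : zmul (codeZ a) (codeZ b) = codeZ (a * b)%R.
Proof.
have [p [q [-> ->]]] := codeZ_E a; have [p' [q' [-> ->]]] := codeZ_E b.
rewrite /zmul !ufstE !usndE znormE; congr codeZ; rewrite !PoszD !PoszM; ring.
Qed.

Lemma codeZ_eq0 z : (codeZ z == 0) = (z == 0%R).
Proof.
case: z => m /=.
- case: m => [|m] //; rewrite cpairE addn0; have Ht := leq_tri_id m.+1; apply/eqP/eqP => H; lia.
- by rewrite cpairE addnS.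
Qed.

Lemma C2znorm : C2 znorm.
Proof. rewrite /C2 /znorm; ccomp. Qed.
#[export] Hint Resolve C2znorm : cdb.
Lemma C2zadd : C2 zadd.
Proof. rewrite /C2 /zadd; ccomp. Qed.
#[export] Hint Resolve C2zadd : cdb.
Lemma C2zsub : C2 zsub.
Proof. rewrite /C2 /zsub; ccomp. Qed.
#[export] Hint Resolve C2zsub : cdb.
Lemma C2zmul : C2 zmul.
Proof. rewrite /C2 /zmul; ccomp. Qed.
#[export] Hint Resolve C2zmul : cdb.

Definition codeS (s : syl) : nat := cpair s.1.1 (cpair (nat_of_bool s.1.2) (codeZ s.2)).
Fixpoint codeL (L : seq syl) : nat :=
  if L is s :: L' then (cpair (codeS s) (codeL L')).+1 else 0.
Definition codeN (N : nf) : nat := cpair (cpair (codeZ N.1.1) (codeZ N.1.2)) (codeL N.2).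

Definition consC a L := (cpair a L).+1.
Definition hxC N := ufst (ufst N).
Definition hyC N := usnd (ufst N).
Definition LC N := usnd N.
Definition hdC Lc := ufst (Lc - 1).
Definition tlC Lc := usnd (Lc - 1).
Definition sgC s := ifz s 2 1.
Definition oddN m := nat_of_bool (odd m).

Lemma C2consC : C2 consC. Proof. rewrite /C2 /consC; ccomp. Qed.
Lemma C1hxC : C1 hxC. Proof. rewrite /C1 /hxC; ccomp. Qed.
Lemma C1hyC : C1 hyC. Proof. rewrite /C1 /hyC; ccomp. Qed.
Lemma C1LC : C1 LC. Proof. rewrite /C1 /LC; ccomp. Qed.
Lemma C1hdC : C1 hdC. Proof. rewrite /C1 /hdC; ccomp. Qed.
Lemma C1tlC : C1 tlC. Proof. rewrite /C1 /tlC; ccomp. Qed.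
Lemma C1sgC : C1 sgC. Proof. rewrite /C1 /sgC; ccomp. Qed.
Lemma C1oddN : C1 oddN. Proof. exact: C1odd. Qed.
#[export] Hint Resolve C2consC C1hxC C1hyC C1LC C1hdC C1tlC C1sgC C1oddN : cdb.

Lemma ifzb (b : bool) x y : ifz b x y = if b then y else x.
Proof. by case: b. Qed.

Section Code.
Variables (k : nat) (n : nat -> int).

Definition tab j := if j < k then codeZ (n j) else 0.
Lemma tabE j : tab j = codeZ (nn k n j).
Proof. by rewrite /tab /nn; case: ifP. Qed.
Lemma C1tabk : C1 tab.
Proof. exact: (C1tab (fun j => codeZ (n j)) k). Qed.
#[local] Hint Resolve C1tabk : cdb.

Definition actB1 i N :=
  ifz (eqN (zsub (hxC N) (zmul (tab i) (hyC N))) 0 * (1 - eqN (LC N) 0)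
        * eqN (ufst (hdC (LC N))) i * eqN (ufst (usnd (hdC (LC N)))) 0)
    (cpair (cpair 0 (hyC N)) (consC (cpair i (cpair 1 (zsub (hxC N) (zmul (tab i) (hyC N))))) (LC N)))
    (cpair (cpair (usnd (usnd (hdC (LC N)))) (hyC N)) (tlC (LC N))).

Definition actB0 i N :=
  ifz (eqN (hxC N) 0 * (1 - eqN (LC N) 0)
        * eqN (ufst (hdC (LC N))) i * eqN (ufst (usnd (hdC (LC N)))) 1)
    (cpair (cpair (zmul (tab i) (hyC N)) (hyC N)) (consC (cpair i (cpair 0 (hxC N))) (LC N)))
    (cpair (cpair (zadd (zmul (tab i) (hyC N)) (usnd (usnd (hdC (LC N))))) (hyC N)) (tlC (LC N))).

Definition actC g s N :=
  ifz g (cpair (cpair (zadd (hxC N) (sgC s)) (hyC N)) (LC N))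
   (ifz (g - 1) (cpair (cpair (hxC N) (zadd (hyC N) (sgC s))) (LC N))
     (ifz s (actB0 (g - 2) N) (actB1 (g - 2) N))).

Lemma C2actB1 : C2 actB1. Proof. rewrite /C2 /actB1; ccomp. Qed.
Lemma C2actB0 : C2 actB0. Proof. rewrite /C2 /actB0; ccomp. Qed.
#[local] Hint Resolve C2actB1 C2actB0 : cdb.
Lemma C3actC : C3 actC. Proof. rewrite /C3 /actC; ccomp. Qed.
#[local] Hint Resolve C3actC : cdb.

Lemma eqN_codeZ0 z : eqN (codeZ z) 0 = (z == 0%R).
Proof. by rewrite eqNE codeZ_eq0. Qed.

Lemma sgCE (s : bool) : sgC s = codeZ (sgnz s).
Proof. by case: s. Qed.

Lemma actC_sim g (s : bool) N : actC g s (codeN N) = codeN (act (nn k n) (g, s) N).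
Proof.
case: N => [[hx hy] L]; rewrite /actC /codeN /hxC /hyC /LC !ufstE !usndE.
case: g => [|[|i]] /=.
- by rewrite sgCE zaddE.
- by rewrite sgCE zaddE.
rewrite !subSS !subn0; case: s => /=.
- rewrite /actB1 /hxC /hyC /LC !ufstE !usndE tabE zmulE zsubE eqN_codeZ0.
  case: L => [|[[i' e'] c1] L'] /=.
  + by rewrite eqNE /= muln0 /=.
  rewrite /hdC /tlC subn1 /= /codeS !ufstE !usndE !eqNE /= ufstE muln1 /consC.
  by case: e' => /=; case: (_ == 0%R); case: (i' == i).
- rewrite /actB0 /hxC /hyC /LC !ufstE !usndE tabE zmulE eqNE codeZ_eq0.
  case: L => [|[[i' e'] c1] L'] /=.
  + by rewrite eqNE /= muln0 /=.
  rewrite /hdC /tlC subn1 /= /codeS !ufstE !usndE !eqNE /= ufstE muln1 /consC zaddE.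
  by case: e' => /=; case: (_ == 0%R); case: (i' == i).
Qed.

Definition stepC st :=
  ifz (ufst st) st
    (cpair (usnd (ufst st - 1))
       (cpair (ufst (usnd st) * leN (half (ufst (ufst st - 1))).+1 k.+2)
          (actC (half (ufst (ufst st - 1))) (1 - oddN (ufst (ufst st - 1))) (usnd (usnd st))))).
Lemma C1stepC : C1 stepC. Proof. rewrite /C1 /stepC; ccomp. Qed.
#[local] Hint Resolve C1stepC : cdb.

Lemma step_sim x s fl N :
  stepC (cpair (code_word (x :: s)) (cpair fl (codeN N))) =
  cpair (code_word s) (cpair (fl * (x.1 < k.+2)) (codeN (act (nn k n) (linv x) N))).
Proof.
rewrite /stepC ufstE /= subn1 /= !ufstE !usndE /code_letter addnC half_bit_double.
rewrite /oddN oddD odd_double addbF leNE -actC_sim.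
rewrite ufstE; by case: x => g [];  rewrite ?muln1 ?muln0.
Qed.

Lemma stepC0 y : stepC (cpair 0 y) = cpair 0 y.
Proof. by rewrite /stepC ufstE. Qed.

Lemma iter_fix j y : iter j stepC (cpair 0 y) = cpair 0 y.
Proof. by elim: j => //= j ->; rewrite stepC0. Qed.

Lemma run_sim s fl N j : size s <= j ->
  iter j stepC (cpair (code_word s) (cpair fl (codeN N))) =
  cpair 0 (cpair (fl * is_word k s) (codeN (foldl (fun N x => act (nn k n) (linv x) N) N s))).
Proof.
elim: s fl N j => [|x s IH] fl N j /=.
- by rewrite muln1 iter_fix.
- case: j => // j Hj; rewrite iterSr step_sim IH //; congr (cpair _ (cpair _ _)).
  by rewrite -mulnA; case: (_ < _); rewrite ?mul0n ?mul1n.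
Qed.

Definition initC c := cpair c (cpair 1 0).
Definition runC m c := iter m stepC (initC c).
Lemma C2runC : C2 runC.
Proof.
have Hf : comp 1 (fun ys => initC (nth 0 ys 0)) by rewrite /initC; ccomp.
have Hg : comp 3 (fun ys => stepC (nth 0 ys 1)) by ccomp.
apply: (comp_ext (comp_rec Hf Hg)) => [[|m [|c [|]]]] //= _.
by elim: m => //= m ->.
Qed.
#[local] Hint Resolve C2runC : cdb.

Definition outC c := ufst (usnd (runC c c)) * eqN (usnd (usnd (runC c c))) 0.
Lemma C1outC : C1 outC. Proof. rewrite /C1 /outC; ccomp. Qed.

End Code.

Lemma cpair_le_snd a b : b <= cpair a b.
Proof. by rewrite cpairE leq_addl. Qed.

Lemma size_code w : size w <= code_word w.
Proof. by elim: w => //= x w IH; rewrite ltnS (leq_trans IH) ?cpair_le_snd. Qed.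

Lemma code_letterK l : code_letter (half l, odd l) = l.
Proof. by rewrite /code_letter /= addnC odd_double_half. Qed.

Lemma code_letter_inj x y : code_letter x = code_letter y -> x = y.
Proof.
case: x => g s; case: y => g' s'; rewrite /code_letter /= => H.
have H1 : (s + g.*2)./2 = (s' + g'.*2)./2 by rewrite addnC H addnC.
rewrite !half_bit_double in H1; subst g'.
by move/eqP: H; rewrite eqn_add2l; case: s; case: s'.
Qed.

Lemma code_word_inj w1 w2 : code_word w1 = code_word w2 -> w1 = w2.
Proof.
elim: w1 w2 => [|x w IH] [|y w'] //= [] /cpair_inj [/code_letter_inj -> /IH ->] //.
Qed.

Lemma code_word_surj c : exists w, code_word w = c.
Proof.
elim: c {-2}c (leqnn c) => [|c IH] [|r] Hr; try by exists [::].
have [a [b Hab]] := cpair_surj r.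
have Hb : b <= c by rewrite -ltnS (leq_trans _ Hr) // ltnS -Hab cpair_le_snd.
have [w Hw] := IH b Hb.
by exists ((half a, odd a) :: w); rewrite /= code_letterK Hw Hab.
Qed.

Lemma cpair_eq0 a b : (cpair a b == 0) = (a == 0) && (b == 0).
Proof.
apply/eqP/andP => [H|[/eqP -> /eqP ->]] //.
have /cpair_inj [-> ->] : cpair a b = cpair 0 0 by rewrite H.
by [].
Qed.

Lemma codeL_eq0 L : (codeL L == 0) = (L == [::]).
Proof. by case: L. Qed.

Lemma codeN_eq0 N : (codeN N == 0) = (N == nf0).
Proof.
case: N => [[hx hy] L]; rewrite /codeN /= !cpair_eq0 !codeZ_eq0 codeL_eq0.
by rewrite /nf0 !xpair_eqE.
Qed.

Theorem main k (n : nat -> int) : word_problem_solvable k (relators k n).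
Proof.
have [p Hp] := C1outC k n.
exists p => c; have Hc := Hp [:: c] erefl; rewrite /= in Hc.
have [w Hw] := code_word_surj c; subst c.
have E : outC k n (code_word w) =
    (is_word k w && (act_word (nn k n) (winv w) nf0 == nf0)).
  rewrite /outC /runC.
  have -> : initC (code_word w) = cpair (code_word w) (cpair 1 (codeN nf0)) by [].
  rewrite run_sim ?size_code // !usndE ufstE.
  by rewrite mul1n eqNE codeN_eq0 act_winv; case: (is_word k w); case: (_ == nf0).
rewrite E in Hc; split.
- move=> [w' [/code_word_inj -> Hw' Ht]].
  by move: Hc; rewrite Hw' /= (triv_iff n Hw').1 // eqxx.
- move=> HP; move: Hc; case Hiw: (is_word k w) => //=.
  case: eqP => // H _; case: HP; exists w; split => //.
  exact/(triv_iff n Hiw).2.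
Qed.

End PartD.
Import PartD.


Theorem mainTheorem3 (k : nat) (hk : (1 <= k)%N) (n : nat -> int) :
  word_problem_solvable k (relators k n).
Proof. exact: main. Qed.
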